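(* Let $V$ be a vector space over a field $\mathbb{K}$ and let $F,G$ be two bilinear forms on $V$. Let $\mathrm{Rad}_R(G)=\{w\in V: G(v,w)=0 \text{ for all } v\in V\}$. Then for all $u,v\in\mathcal{T}(V)$ and all $w\in \mathcal{T}(\mathrm{Rad}_R(G))\subseteq\mathcal{T}(V)$, $$\Lambda_F(\Lambda_G(u)(v))(w)=\Lambda_{F+G}(u)\big(\Lambda_F(v)(w)\big).$$
   Context: $\mathcal{T}(V)$ is the tensor algebra of $V$ (product $\otimes$), and $\mathcal{T}(\mathrm{Rad}_R(G))$ is the subalgebra generated by $\mathrm{Rad}_R(G)$. For $x\in V$, $e_x(u)=x\otimes u$. For $f\in V^*$, $i_f$ is the unique linear map on $\mathcal{T}(V)$ with $i_f(1)=0$ and $i_f(x\otimes u)=f(x)u-x\otimes i_f(u)$ ($x\in V$). For a bilinear form $F$ and $x\in V$, $i_x^F:=i_{f_x}$ with $f_x(y)=F(x,y)$. $\Lambda_F:\mathcal{T}(V)\to\mathrm{End}(\mathcal{T}(V))$ is the unique unital algebra homomorphism with $\Lambda_F(x)=e_x+i_x^F$ for $x\in V$. *)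

(* Defs.v *)
From HB Require Import structures.
From mathcomp Require Import all_boot all_algebra.
From mathcomp Require Import finmap.
From mathcomp.multinomials Require Import monalg.

Set Implicit Arguments.
Unset Strict Implicit.
Unset Printing Implicit Defensive.
Import GRing.Theory.
Local Open Scope ring_scope.

(* The vector space V comes with a chosen basis indexed by
   I, given as a linear isomorphism phi : V -> {malg K[I]} (finitely
   supported coordinates) with inverse psi.  The tensor algebra T(V) is then
   realised as the free associative algebra on the basis, i.e. the monoid
   algebra {malg K[{fmonom I}]} over the free monoid on I (words). *)

Section TensorAlgebra.
Variables (K : fieldType) (I : choiceType) (V : lmodType K).
Variables (phi : V -> {malg K[I]}) (psi : {malg K[I]} -> V).

Definition TV := {malg K[{fmonom I}]}.

Definition word (s : seq I) : TV := << FMonom s >>.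

Definition letter (i : I) : V := psi << i >>.

Definition iota (x : V) : TV :=
  \sum_(i <- msupp (phi x)) (phi x)@_i *: word [:: i].

Definition ex (x : V) (u : TV) : TV := iota x * u.

Fixpoint iw (f : V -> K) (s : seq I) : TV :=
  match s with
  | [::] => 0
  | i :: s' => f (letter i) *: word s' - word [:: i] * iw f s'
  end.

Definition ins (f : V -> K) (u : TV) : TV :=
  \sum_(m <- msupp u) u@_m *: iw f m.

Definition insF (F : V -> V -> K) (x : V) : TV -> TV := ins (F x).

Definition LamV (F : V -> V -> K) (x : V) (u : TV) : TV :=
  ex x u + insF F x u.

Definition lamw (F : V -> V -> K) (s : seq I) : TV -> TV :=
  foldr (fun i g => fun u => LamV F (letter i) (g u)) id s.

(* Lambda_F : T(V) -> End(T(V)), the unital algebra morphism extending LamV *)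
Definition Lam (F : V -> V -> K) (u : TV) (t : TV) : TV :=
  \sum_(m <- msupp u) u@_m *: lamw F m t.

Definition RadR (G : V -> V -> K) (w : V) : Prop := forall v, G v w = 0.

Inductive TRad (G : V -> V -> K) : TV -> Prop :=
  | TRad_gen w : RadR G w -> TRad G (iota w)
  | TRad_one : TRad G 1
  | TRad_add a b : TRad G a -> TRad G b -> TRad G (a + b)
  | TRad_scale (c : K) a : TRad G a -> TRad G (c *: a)
  | TRad_mul a b : TRad G a -> TRad G b -> TRad G (a * b).

End TensorAlgebra.

Definition addForm (K : fieldType) (V : lmodType K) (F G : V -> V -> K) :
  V -> V -> K := fun x y => F x y + G x y.

(* Main.v *)
Require Import Defs.
From HB Require Import structures.
From mathcomp Require Import all_boot all_algebra.
From mathcomp Require Import finmap.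
From mathcomp.multinomials Require Import monalg.
Import GRing.Theory.
Local Open Scope ring_scope.

Set Implicit Arguments.
Unset Strict Implicit.
Unset Printing Implicit Defensive.

Lemma zh (Z : zmodType) (a b w : Z) : a - (b - - w) = - (b - (a - w)).
Proof. by rewrite opprK [RHS]opprB opprD addrA addrAC. Qed.

Section Lin.
Variables (K : fieldType) (W1 W2 : lmodType K).
Definition lin (h : W1 -> W2) := forall (a : K) x y, h (a *: x + y) = a *: h x + h y.
Variables (h : W1 -> W2) (hl : lin h).
Lemma lin0 : h 0 = 0.
Proof.
have E := hl 1 0 0; rewrite !scale1r addr0 in E.
by apply/(addrI (h 0)); rewrite -E addr0.
Qed.
Lemma linD x y : h (x + y) = h x + h y.
Proof. by have := hl 1 x y; rewrite !scale1r. Qed.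
Lemma linZ a x : h (a *: x) = a *: h x.
Proof. by have := hl a x 0; rewrite !addr0 lin0 addr0. Qed.
Lemma linN x : h (- x) = - h x.
Proof. by rewrite -scaleN1r linZ scaleN1r. Qed.
Lemma linB x y : h (x - y) = h x - h y.
Proof. by rewrite linD linN. Qed.
Lemma lin_sum (T : Type) (r : seq T) (F : T -> W1) :
  h (\sum_(i <- r) F i) = \sum_(i <- r) h (F i).
Proof. exact: (big_morph h linD lin0). Qed.
End Lin.

Section Lext.
Variables (K : fieldType) (M : choiceType) (W : lmodType K).
Definition Lext (g : M -> W) (u : {malg K[M]}) : W :=
  \sum_(m <- msupp u) u@_m *: g m.
Lemma LextEw g u (d : {fset M}) : (msupp u `<=` d)%fset ->
  Lext g u = \sum_(m <- d) u@_m *: g m.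
Proof.
move=> le; rewrite /Lext (big_fset_incl _ le) //= => x _ /mcoeff_outdom ->.
by rewrite scale0r.
Qed.
Lemma Lext_lin g : lin (Lext g).
Proof.
move=> a u v.
set d := (msupp u `|` msupp v `|` msupp (a *: u + v))%fset.
have h1 : (msupp u `<=` d)%fset.
  by rewrite /d; apply: fsubset_trans (fsubsetUl _ _) (fsubsetUl _ _).
have h2 : (msupp v `<=` d)%fset.
  by rewrite /d; apply: fsubset_trans (fsubsetUr _ _) (fsubsetUl _ _).
have h3 : (msupp (a *: u + v) `<=` d)%fset by rewrite /d fsubsetUr.
rewrite (LextEw g h1) (LextEw g h2) (LextEw g h3) scaler_sumr -big_split /=.
by apply: eq_bigr => m _; rewrite mcoeffD mcoeffZ scalerDl scalerA.
Qed.
Lemma LextU g m : Lext g << m >> = g m.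
Proof. by rewrite /Lext msuppU oner_eq0 big_seq_fset1 mcoeffUU scale1r. Qed.
Lemma malgUZ (c : K) (m : M) : << c *g m >> = c *: (<< m >> : {malg K[M]}).
Proof. by apply/malgP => k; rewrite mcoeffZ !mcoeffU mulr_natr. Qed.
Lemma malg_decomp (p : {malg K[M]}) : p = \sum_(m <- msupp p) p@_m *: << m >>.
Proof. by rewrite {1}(monalgE p); apply: eq_bigr => m _; rewrite malgUZ. Qed.
End Lext.

Section Main.
Variables (K : fieldType) (I : choiceType) (V : lmodType K).
Variables (phi : {linear V -> {malg K[I]}}) (psi : {malg K[I]} -> V).
Hypotheses (phiK : cancel phi psi) (psiK : cancel psi phi).

Local Notation TV := (TV K I).
Local Notation word := (@Defs.word K I).
Local Notation li := (letter psi).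

Lemma word_cat s t : word s * word t = word (s ++ t).
Proof.
rewrite /word malgM_def fgmulUU mulr1.
by rewrite /mmul /= fmmulE.
Qed.

Lemma word_nil : word [::] = 1.
Proof. by rewrite /word -fmoneE. Qed.

Lemma wordE (m : {fmonom I}) : word m = << m >>.
Proof. by rewrite /word fmK. Qed.

Lemma decomp (p : TV) : p = \sum_(m <- msupp p) p@_m *: word m.
Proof.
by rewrite {1}(malg_decomp p); apply: eq_bigr => m _; rewrite wordE.
Qed.

Lemma agree (W : lmodType K) (h1 h2 : TV -> W) : lin h1 -> lin h2 ->
  (forall s, h1 (word s) = h2 (word s)) -> forall p, h1 p = h2 p.
Proof.
move=> l1 l2 H p; rewrite (decomp p) !lin_sum //.
by apply: eq_bigr => m _; rewrite !linZ // H.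
Qed.

Lemma ins_lin f : lin (ins psi f).
Proof. exact: (Lext_lin (fun m : {fmonom I} => iw psi f m)). Qed.

Lemma ins_word f s : ins psi f (word s) = iw psi f s.
Proof.
exact: (LextU (fun m : {fmonom I} => iw psi f m) (FMonom s)).
Qed.

Lemma scalerAr' (a : TV) (c : K) (x : TV) : a * (c *: x) = c *: (a * x).
Proof.
apply/malgP => k; rewrite mcoeffZ (mcoeffMlw _ (fsubset_refl _) (msuppZ_le c x)).
rewrite mcoeffMl mulr_sumr; apply: eq_bigr => k1 _.
rewrite mulr_sumr; apply: eq_bigr => k2 _.
by rewrite mcoeffZ !mulrnAr mulrCA.
Qed.

Lemma mull_lin (a : TV) : lin (fun p : TV => a * p).
Proof. by move=> c x y /=; rewrite mulrDr scalerAr'. Qed.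

Lemma ins_wordl f i (p : TV) :
  ins psi f (word [:: i] * p) = f (li i) *: p - word [:: i] * ins psi f p.
Proof.
pose h1 := fun p => ins psi f (word [:: i] * p).
pose h2 := fun p => f (li i) *: p - word [:: i] * ins psi f p.
have l1 : lin h1 by move=> c x y; rewrite /h1 mull_lin ins_lin.
have l2 : lin h2.
  move=> c x y; rewrite /h2 ins_lin mull_lin scalerBr !scalerA mulrC -scalerA.
  by rewrite scalerDr addrACA opprD.
apply: (agree l1 l2) => s; rewrite /h1 /h2 word_cat ins_word ins_word /=.
by [].
Qed.

Lemma ins_add f g (p : TV) :
  ins psi (fun y => f y + g y) p = ins psi f p + ins psi g p.
Proof.
have E : forall s, iw psi (fun y => f y + g y) s = iw psi f s + iw psi g s.
  elim=> [|i s IH] /=; first by rewrite addr0.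
  rewrite IH scalerDl mulrDr opprD.
  by rewrite addrACA.
rewrite /ins -big_split /=; apply: eq_bigr => m _.
by rewrite E scalerDr.
Qed.

Lemma anticomm f g (t : TV) :
  ins psi g (ins psi f t) = - ins psi f (ins psi g t).
Proof.
pose h1 := fun t => ins psi g (ins psi f t).
pose h2 := fun t => - ins psi f (ins psi g t).
have l1 : lin h1 by move=> c x y; rewrite /h1 !ins_lin.
have l2 : lin h2 by move=> c x y; rewrite /h2 !ins_lin opprD scalerN.
apply: (agree l1 l2) => s; rewrite /h1 /h2 !ins_word.
elim: s => [|i s IH] /=.
  by rewrite !(lin0 (ins_lin _)) oppr0.
rewrite !(linB (ins_lin _)) !(linZ (ins_lin _)) !ins_wordl.
by rewrite !ins_word IH mulrN; exact: zh.
Qed.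

Section LamS.
Variable F : V -> V -> K.
Local Notation Lam := (Lam phi psi F).
Local Notation lamw := (lamw phi psi F).
Local Notation LamV := (LamV phi psi F).

Lemma LamV_lin x : lin (LamV x).
Proof.
move=> c a b; rewrite /LamV /ex /insF ins_lin mull_lin.
by rewrite scalerDr addrACA.
Qed.

Lemma lamw_lin s : lin (lamw s).
Proof.
elim: s => [|i s IH] c a b //=.
by rewrite IH LamV_lin.
Qed.

Lemma Lam_lin u : lin (Lam u).
Proof.
move=> c a b; rewrite /Defs.Lam scaler_sumr -big_split /=; apply: eq_bigr => m _.
by rewrite lamw_lin scalerDr !scalerA mulrC.
Qed.

Lemma Lamu_lin t : lin (fun u => Lam u t).
Proof. exact: (Lext_lin (fun m : {fmonom I} => lamw m t)). Qed.

Lemma LamuD u v t : Lam (u + v) t = Lam u t + Lam v t.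
Proof. have H := linD (Lamu_lin t) u v; simpl in H; exact H. Qed.
Lemma LamuZ c u t : Lam (c *: u) t = c *: Lam u t.
Proof. have H := linZ (Lamu_lin t) c u; simpl in H; exact H. Qed.
Lemma LamuB u v t : Lam (u - v) t = Lam u t - Lam v t.
Proof. have H := linB (Lamu_lin t) u v; simpl in H; exact H. Qed.
Lemma Lamu0 t : Lam 0 t = 0.
Proof. have H := lin0 (Lamu_lin t); simpl in H; exact H. Qed.
Lemma Lamu_sum (T : Type) (r : seq T) (P : T -> TV) t :
  Lam (\sum_(i <- r) P i) t = \sum_(i <- r) Lam (P i) t.
Proof. have H := lin_sum (Lamu_lin t) r P; simpl in H; exact H. Qed.

Lemma Lam_word s t : Lam (word s) t = lamw s t.
Proof. exact: (LextU (fun m : {fmonom I} => lamw m t) (FMonom s)). Qed.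

Lemma Lam_wordl i p t : Lam (word [:: i] * p) t = LamV (li i) (Lam p t).
Proof.
pose h1 := fun p => Lam (word [:: i] * p) t.
pose h2 := fun p => LamV (li i) (Lam p t).
have l1 : lin h1 by move=> c x y; rewrite /h1 mull_lin LamuD LamuZ.
have l2 : lin h2 by move=> c x y; rewrite /h2 LamuD LamuZ LamV_lin.
apply: (agree l1 l2) => s; rewrite /h1 /h2 word_cat !Lam_word.
reflexivity.
Qed.
End LamS.

Lemma iota_letter i : Defs.iota phi (li i) = word [:: i].
Proof.
by rewrite /Defs.iota /letter psiK msuppU oner_eq0 big_seq_fset1 mcoeffUU scale1r.
Qed.

Lemma psi_lin : lin psi.
Proof.
move=> a p q; apply: (can_inj phiK).
by rewrite linearP !psiK.
Qed.

Section GL.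
Variable g : V -> K.
Hypothesis gl : forall (a : K) (x y : V), g (a *: x + y) = a * g x + g y.
Lemma g0 : g 0 = 0.
Proof.
have E := gl 1 0 0; rewrite scale1r mul1r addr0 in E.
by apply/(addrI (g 0)); rewrite -E addr0.
Qed.
Lemma gD x y : g (x + y) = g x + g y.
Proof. by have := gl 1 x y; rewrite !scale1r mul1r. Qed.
Lemma gZ a x : g (a *: x) = a * g x.
Proof. by have := gl a x 0; rewrite !addr0 g0 addr0. Qed.
Lemma g_sum (T : Type) (r : seq T) (P : T -> V) :
  g (\sum_(i <- r) P i) = \sum_(i <- r) g (P i).
Proof. exact: (big_morph g gD g0). Qed.

Lemma ins_iota y : ins psi g (Defs.iota phi y) = g y *: 1.
Proof.
have E : g y = \sum_(j <- msupp (phi y)) (phi y)@_j * g (li j).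
  rewrite -{1}(phiK y) {1}(malg_decomp (phi y)) (lin_sum psi_lin) g_sum.
  by apply: eq_bigr => j _; rewrite (linZ psi_lin) gZ.
rewrite E /Defs.iota (lin_sum (ins_lin g)) scaler_suml; apply: eq_bigr => j _.
rewrite (linZ (ins_lin g)) ins_word /= mulr0 subr0 word_nil.
by rewrite scalerA.
Qed.

Lemma ins_mul b : ins psi g b = 0 -> forall a, ins psi g (a * b) = ins psi g a * b.
Proof.
move=> Hb.
pose h1 := fun a => ins psi g (a * b).
pose h2 := fun a => ins psi g a * b.
have l1 : lin h1 by move=> c x y; rewrite /h1 mulrDl -scalerAl ins_lin.
have l2 : lin h2 by move=> c x y; rewrite /h2 ins_lin mulrDl -scalerAl.
apply: (agree l1 l2) => s; rewrite /h1 /h2.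
elim: s => [|i s IH].
  by rewrite word_nil mul1r Hb -word_nil ins_word /= mul0r.
have -> : word (i :: s) = word [:: i] * word s by rewrite word_cat.
rewrite -mulrA ins_wordl IH ins_wordl mulrBl -scalerAl mulrA.
by [].
Qed.
End GL.

Variables (F G : V -> V -> K).
Hypothesis G_linr : forall (a : K) (x y z : V), G z (a *: x + y) = a * G z x + G z y.

Lemma vanish w : TRad phi G w -> forall x, ins psi (G x) w = 0.
Proof.
move=> Hw x; elim: Hw => [y Ry | | a b _ Ha _ Hb | c a _ Ha | a b _ Ha _ Hb].
- by rewrite ins_iota ?Ry ?scale0r // => a p q; exact: G_linr.
- by rewrite -word_nil ins_word.
- by rewrite (linD (ins_lin _)) Ha Hb addr0.
- by rewrite (linZ (ins_lin _)) Ha scaler0.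
- by rewrite ins_mul // Ha mul0r.
Qed.

Lemma key g w : ins psi g w = 0 ->
  forall y, Lam phi psi F (ins psi g y) w = ins psi g (Lam phi psi F y w).
Proof.
move=> Hg.
pose h1 := fun y => Lam phi psi F (ins psi g y) w.
pose h2 := fun y => ins psi g (Lam phi psi F y w).
have l1 : lin h1 by move=> c x y; rewrite /h1 ins_lin LamuD LamuZ.
have l2 : lin h2 by move=> c x y; rewrite /h2 LamuD LamuZ ins_lin.
apply: (agree l1 l2) => s; rewrite /h1 /h2.
elim: s => [|i s IH].
  by rewrite ins_word /= Lamu0 Lam_word /= Hg.
rewrite ins_word /= LamuB LamuZ Lam_wordl -ins_word IH !Lam_word /=.
rewrite /LamV /ex /insF iota_letter (linD (ins_lin _)) ins_wordl.
rewrite (anticomm (F (li i)) g (lamw phi psi F s w)).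
by rewrite opprD addrA.
Qed.

End Main.

Section M2.
Variables (K : fieldType) (I : choiceType) (V : lmodType K).
Variables (phi : {linear V -> {malg K[I]}}) (psi : {malg K[I]} -> V).
Hypotheses (phiK : cancel phi psi) (psiK : cancel psi phi).
Local Notation TV := (TV K I).
Local Notation word := (@Defs.word K I).
Local Notation li := (letter psi).
Variables (F G : V -> V -> K).
Hypothesis G_linr : forall (a : K) (x y z : V), G z (a *: x + y) = a * G z x + G z y.


Lemma main_word w : TRad phi G w -> forall s v,
  Lam phi psi F (lamw phi psi G s v) w
  = lamw phi psi (addForm F G) s (Lam phi psi F v w).
Proof.
move=> Hw; have Hv := vanish phiK psiK G_linr Hw.
elim=> [|i s IH] v; first by [].
change (Lam phi psi F (LamV phi psi G (li i) (lamw phi psi G s v)) w =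
   LamV phi psi (addForm F G) (li i) (lamw phi psi (addForm F G) s (Lam phi psi F v w))).
rewrite {1}/LamV /ex /insF.
rewrite (iota_letter psiK) LamuD Lam_wordl key; last exact: Hv.
rewrite IH.
rewrite /LamV /ex /insF /addForm ins_add.
by rewrite (iota_letter psiK) addrA.
all: try exact: psiK.
Qed.

Lemma main_sec (u v w : TV) : TRad phi G w ->
  Lam phi psi F (Lam phi psi G u v) w = Lam phi psi (addForm F G) u (Lam phi psi F v w).
Proof.
move=> Hw.
have -> : Lam phi psi G u v = \sum_(m <- msupp u) u@_m *: lamw phi psi G m v by [].
rewrite Lamu_sum.
transitivity (\sum_(m <- msupp u) u@_m *: lamw phi psi (addForm F G) m (Lam phi psi F v w)); last by [].
by apply: eq_bigr => m _; rewrite LamuZ main_word.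
Qed.
End M2.


Theorem mainTheorem2 (K : fieldType) (I : choiceType) (V : lmodType K)
  (phi : {linear V -> {malg K[I]}}) (psi : {malg K[I]} -> V)
  (phiK : cancel phi psi) (psiK : cancel psi phi)
  (F G : V -> V -> K)
  (F_linl : forall (a : K) (x y z : V), F (a *: x + y) z = a * F x z + F y z)
  (F_linr : forall (a : K) (x y z : V), F z (a *: x + y) = a * F z x + F z y)
  (G_linl : forall (a : K) (x y z : V), G (a *: x + y) z = a * G x z + G y z)
  (G_linr : forall (a : K) (x y z : V), G z (a *: x + y) = a * G z x + G z y) :
  forall (u v w : TV K I),
    TRad phi G w ->
    Lam phi psi F (Lam phi psi G u v) w
    = Lam phi psi (addForm F G) u (Lam phi psi F v w).
Proof.
move=> u v w Hw.
exact: (main_sec phiK psiK F G_linr u v Hw).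
Qed.
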